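(* For every integer $n\geq1$, $\mathrm{C}_{\sharp=n}\leq_W\mathrm{C}_\mathbb{N}$.
   Context: Represented spaces carry partial surjections $\delta:\subseteq\mathbb{N}^\mathbb{N}\to X$; a realizer $F$ of $f$ satisfies $\delta_YF(p)\in f(\delta_X(p))$ for $p\in\operatorname{dom}(f\delta_X)$. $f\leq_W g$ iff there are computable partial $K,H$ on Baire space such that $p\mapsto K\langle p,G(H(p))\rangle$ realizes $f$ for every realizer $G$ of $g$. $\mathrm{C}_\mathbb{N}$ is closed choice on $\mathbb{N}$: given a non-empty $A\subseteq\mathbb{N}$ via an enumeration of $\mathbb{N}\setminus A$, output an element of $A$. Closed subsets of Cantor space are named by binary trees (set of infinite paths); $\mathrm{C}_{\sharp=n}$ is the restriction of $\mathrm{C}_{\{0,1\}^\mathbb{N}}$ (output any point of the closed set) to trees having exactly $n$ vertices at each level $k$ with $2^k\geq n$ and in which, from some finite depth on, every vertex has exactly one child. *)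

(* Defs.v *)
From Stdlib Require Import Arith List.
Import ListNotations.

Definition baire := nat -> nat.

Inductive rterm : Type :=
| RZero
| RSucc
| RProj (i : nat)
| RComp (f : rterm) (gs : list rterm)
| RPrim (f g : rterm)
| RMu (f : rterm)
| ROracle.

Inductive eval (p : baire) : rterm -> list nat -> nat -> Prop :=
| e_zero args : eval p RZero args 0
| e_succ x args : eval p RSucc (x :: args) (S x)
| e_proj i args v : nth_error args i = Some v -> eval p (RProj i) args v
| e_comp f gs args vs v :
    evall p gs args vs -> eval p f vs v -> eval p (RComp f gs) args v
| e_prim0 f g args v : eval p f args v -> eval p (RPrim f g) (0 :: args) v
| e_primS f g y args r v :
    eval p (RPrim f g) (y :: args) r -> eval p g (y :: r :: args) v ->
    eval p (RPrim f g) (S y :: args) v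
| e_mu f args n :
    eval p f (n :: args) 0 ->
    (forall m, m < n -> exists v, eval p f (m :: args) (S v)) ->
    eval p (RMu f) args n
| e_oracle x args : eval p ROracle (x :: args) (p x)
with evall (p : baire) : list rterm -> list nat -> list nat -> Prop :=
| el_nil args : evall p [] args []
| el_cons g gs args v vs :
    eval p g args v -> evall p gs args vs -> evall p (g :: gs) args (v :: vs).

(* The computable partial function Phi_t : Baire -> Baire given by t:
   Phi_t(p) = q  iff  for every k, t with oracle p on input k halts with q k.
   (Its domain is the set of p on which t halts on every input.) *)
Definition computes (t : rterm) (p q : baire) : Prop :=
  forall k, eval p t [k] (q k).

Definition bpair (p q : baire) : baire :=
  fun i => if Nat.even i then p (Nat.div2 i) else q (Nat.div2 i).

Record pfun := { pdom : baire -> Prop; pval : baire -> baire }.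

Record rep_space := { carrier : Type; delta : baire -> carrier -> Prop }.

Definition problem (X Y : rep_space) := carrier X -> carrier Y -> Prop.
Definition pdomain {X Y : rep_space} (f : problem X Y) (x : carrier X) : Prop :=
  exists y, f x y.

Definition realizes {X Y : rep_space} (f : problem X Y) (F : pfun) : Prop :=
  forall p x, delta X p x -> pdomain f x ->
    pdom F p /\ exists y, delta Y (pval F p) y /\ f x y.

(* Weihrauch reducibility f <=_W g: computable partial K, H such that
   p |-> K<p, G(H(p))> realizes f for every realizer G of g. *)
Definition Wle {X Y X' Y' : rep_space} (f : problem X Y) (g : problem X' Y') : Prop :=
  exists tH tK : rterm,
    forall G : pfun, realizes g G ->
      forall p x, delta X p x -> pdomain f x ->
        exists h, computes tH p h /\ pdom G h /\
          exists r, computes tK (bpair p (pval G h)) r /\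
            exists y, delta Y r y /\ f x y.

Definition nat_rep : rep_space := {| carrier := nat; delta := fun p n => p 0 = n |}.

(* closed subsets of N, named by an enumeration of the complement:
   p names A iff N \ A = { n | exists i, p i = n+1 } (0 = "no information") *)
Definition closedN_rep : rep_space :=
  {| carrier := nat -> Prop;
     delta := fun p A => forall n, A n <-> ~ (exists i, p i = S n) |}.

Definition C_N : problem closedN_rep nat_rep := fun A n => A n.

Definition cantor_rep : rep_space :=
  {| carrier := nat -> bool;
     delta := fun p x => forall i, p i = (if x i then 1 else 0) |}.

(* finite binary words, coded bijectively by natural numbers *)
Fixpoint wcode (w : list bool) : nat :=
  match w with
  | [] => 0
  | b :: w' => S (2 * wcode w' + (if b then 1 else 0))
  end.

Definition is_tree (T : list bool -> Prop) : Prop :=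
  forall w b, T (w ++ [b]) -> T w.

Definition tree_rep : rep_space :=
  {| carrier := list bool -> Prop;
     delta := fun p T => is_tree T /\ forall w, T w <-> p (wcode w) <> 0 |}.

Definition prefix (x : nat -> bool) (k : nat) : list bool := map x (seq 0 k).

Definition is_path (T : list bool -> Prop) (x : nat -> bool) : Prop :=
  forall k, T (prefix x k).

Definition level_card (T : list bool -> Prop) (k m : nat) : Prop :=
  exists l : list (list bool), NoDup l /\ length l = m /\
    forall w, (length w = k /\ T w) <-> In w l.

Definition sharp_tree (n : nat) (T : list bool -> Prop) : Prop :=
  (forall k, n <= 2 ^ k -> level_card T k n) /\
  (exists d, forall w, T w -> d <= length w ->
     (T (w ++ [true]) <-> ~ T (w ++ [false]))).

Definition C_sharp (n : nat) : problem tree_rep cantor_rep :=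
  fun T x => sharp_tree n T /\ is_path T x.

(* Main.v *)
Require Import Defs.
From Stdlib Require Import Arith List Lia.
Import ListNotations.

Definition ok (n : nat) (t : rterm) (F : baire -> list nat -> nat) : Prop :=
  forall p a, n <= length a -> eval p t a (F p a).

Lemma ok_ext n t F F' : ok n t F ->
  (forall p a, n <= length a -> F p a = F' p a) -> ok n t F'.
Proof. intros H E p a L. rewrite <- E by exact L. apply H; exact L. Qed.

Lemma ok_mono n m t F : n <= m -> ok n t F -> ok m t F.
Proof. intros Hn H p a L. apply H; lia. Qed.

Lemma ok_zero n : ok n RZero (fun _ _ => 0).
Proof. intros p a L. constructor. Qed.

Lemma ok_proj n i : i < n -> ok n (RProj i) (fun _ a => nth i a 0).
Proof. intros Hi p a L. constructor. apply nth_error_nth'. lia. Qed.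

Lemma ok_succ1 : ok 1 RSucc (fun _ a => S (nth 0 a 0)).
Proof. intros p [|x a] L; simpl in L; [lia|]. constructor. Qed.

Lemma ok_oracle1 : ok 1 ROracle (fun p a => p (nth 0 a 0)).
Proof. intros p [|x a] L; simpl in L; [lia|]. constructor. Qed.

Fixpoint okl (n : nat) (gs : list rterm) (Fs : list (baire -> list nat -> nat)) : Prop :=
  match gs, Fs with
  | [], [] => True
  | g :: gs', F :: Fs' => ok n g F /\ okl n gs' Fs'
  | _, _ => False
  end.

Lemma evall_ok n gs Fs p a : okl n gs Fs -> n <= length a ->
  evall p gs a (map (fun F => F p a) Fs).
Proof.
  revert Fs; induction gs as [|g gs IHgs]; intros [|F Fs] H L; simpl in *; try tauto.
  - constructor.
  - destruct H. constructor; [apply H|apply IHgs]; auto.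
Qed.

Lemma ok_comp m f F n gs Fs : ok m f F -> okl n gs Fs -> m <= length Fs ->
  ok n (RComp f gs) (fun p a => F p (map (fun G => G p a) Fs)).
Proof.
  intros Hf Hg Hm p a L. apply e_comp with (vs := map (fun G => G p a) Fs).
  - apply (evall_ok n); assumption.
  - apply Hf. rewrite length_map. exact Hm.
Qed.

Fixpoint prec (F0 G : list nat -> nat) (y : nat) (a : list nat) : nat :=
  match y with
  | 0 => F0 a
  | S y' => G (y' :: prec F0 G y' a :: a)
  end.

Lemma ok_prim n f F g G : ok n f F -> ok (S (S n)) g G ->
  ok (S n) (RPrim f g) (fun p a => prec (F p) (G p) (nth 0 a 0) (tl a)).
Proof.
  intros Hf Hg p [|y a] L; simpl in L; [lia|]. simpl.
  induction y as [|y IH]; simpl.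
  - constructor. apply Hf. lia.
  - econstructor. exact IH. apply Hg. simpl. lia.
Qed.

Fixpoint findz (f : nat -> nat) (n : nat) : nat :=
  match n with
  | 0 => 0
  | S n' => let r := findz f n' in if f r =? 0 then r else S n'
  end.

Lemma findz_inv f n : (forall k, k < findz f n -> f k <> 0) /\
  (f (findz f n) <> 0 -> findz f n = n).
Proof.
  induction n as [|n [IH1 IH2]]; simpl.
  - split; [intros; lia | auto].
  - destruct (f (findz f n) =? 0) eqn:E.
    + apply Nat.eqb_eq in E. split; [exact IH1| intros C; congruence].
    + apply Nat.eqb_neq in E. specialize (IH2 E). split; [|auto].
      intros k Hk. destruct (Nat.eq_dec k n). subst. rewrite <- IH2. exact E.
      apply IH1. lia.
Qed.

Lemma findz_spec f n m : m <= n -> f m = 0 ->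
  f (findz f n) = 0 /\ forall k, k < findz f n -> f k <> 0.
Proof.
  intros Hm Hz. destruct (findz_inv f n) as [H1 H2].
  split; [|exact H1].
  destruct (Nat.eq_dec (f (findz f n)) 0) as [E|E]; [exact E|].
  specialize (H2 E). destruct (Nat.lt_ge_cases m (findz f n)).
  - exfalso. apply (H1 m); auto.
  - exfalso. assert (findz f n = m) by lia. congruence.
Qed.

Lemma findz_eq f n m : m <= n -> f m = 0 -> (forall k, k < m -> f k <> 0) ->
  findz f n = m.
Proof.
  intros Hm Hz Hl. destruct (findz_spec f n m Hm Hz) as [A B].
  destruct (Nat.lt_total (findz f n) m) as [C|[C|C]]; auto.
  - exfalso. apply (Hl _ C A).
  - exfalso. apply (B m C Hz).
Qed.

Lemma ok_mu n f F B : ok (S n) f F ->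
  (forall p a, n <= length a -> exists m, m <= B p a /\ F p (m :: a) = 0) ->
  ok n (RMu f) (fun p a => findz (fun m => F p (m :: a)) (B p a)).
Proof.
  intros Hf Hex p a L. destruct (Hex p a L) as [m [Hm Hz]].
  destruct (findz_spec (fun m => F p (m :: a)) (B p a) m Hm Hz) as [A C].
  constructor.
  - rewrite <- A. apply Hf. simpl; lia.
  - intros k Hk. specialize (C k Hk). destruct (F p (k :: a)) as [|v] eqn:E; [congruence|].
    exists v. rewrite <- E. apply Hf. simpl; lia.
Qed.

Lemma comp1 f F n g1 G1 : ok 1 f F -> ok n g1 G1 ->
  ok n (RComp f [g1]) (fun p a => F p [G1 p a]).
Proof. intros. eapply ok_ext. apply (ok_comp 1 f F n [g1] [G1]); simpl; auto. reflexivity. Qed.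
Lemma comp2 f F n g1 G1 g2 G2 : ok 2 f F -> ok n g1 G1 -> ok n g2 G2 ->
  ok n (RComp f [g1;g2]) (fun p a => F p [G1 p a; G2 p a]).
Proof. intros. eapply ok_ext. apply (ok_comp 2 f F n [g1;g2] [G1;G2]); simpl; auto. reflexivity. Qed.
Lemma comp3 f F n g1 G1 g2 G2 g3 G3 : ok 3 f F -> ok n g1 G1 -> ok n g2 G2 -> ok n g3 G3 ->
  ok n (RComp f [g1;g2;g3]) (fun p a => F p [G1 p a; G2 p a; G3 p a]).
Proof. intros. eapply ok_ext. apply (ok_comp 3 f F n [g1;g2;g3] [G1;G2;G3]); simpl; auto. reflexivity. Qed.
Lemma comp4 f F n g1 G1 g2 G2 g3 G3 g4 G4 : ok 4 f F -> ok n g1 G1 -> ok n g2 G2 -> ok n g3 G3 -> ok n g4 G4 ->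
  ok n (RComp f [g1;g2;g3;g4]) (fun p a => F p [G1 p a; G2 p a; G3 p a; G4 p a]).
Proof. intros. eapply ok_ext. apply (ok_comp 4 f F n [g1;g2;g3;g4] [G1;G2;G3;G4]); simpl; auto. reflexivity. Qed.

Fixpoint cst (k : nat) : rterm := match k with 0 => RZero | S k => RComp RSucc [cst k] end.
Lemma ok_cst n k : ok n (cst k) (fun _ _ => k).
Proof.
  induction k; simpl. apply ok_zero.
  eapply ok_ext. apply comp1. apply ok_succ1. exact IHk. reflexivity.
Qed.

Definition Sc t := RComp RSucc [t].
Lemma ok_Sc n t F : ok n t F -> ok n (Sc t) (fun p a => S (F p a)).
Proof. intros. eapply ok_ext. apply comp1. apply ok_succ1. all: eauto. Qed.
Definition Orc t := RComp ROracle [t].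
Lemma ok_Orc n t F : ok n t F -> ok n (Orc t) (fun p a => p (F p a)).
Proof. intros. eapply ok_ext. apply comp1. apply ok_oracle1. all: eauto. Qed.

Definition tadd := RPrim (RProj 0) (RComp RSucc [RProj 1]).
Lemma ok_tadd : ok 2 tadd (fun _ a => nth 0 a 0 + nth 1 a 0).
Proof.
  eapply ok_ext. apply ok_prim. apply ok_proj; lia.
  apply ok_Sc. apply ok_proj; lia.
  intros p [|y [|x a]] L; simpl in L; try lia. simpl.
  induction y; simpl; try rewrite IHy; auto; lia.
Qed.
Definition Pl t1 t2 := RComp tadd [t1; t2].
Lemma ok_Pl n t1 F1 t2 F2 : ok n t1 F1 -> ok n t2 F2 -> ok n (Pl t1 t2) (fun p a => F1 p a + F2 p a).
Proof. intros. eapply ok_ext. apply comp2. apply ok_tadd. all: eauto. Qed.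

Definition tmul := RPrim RZero (Pl (RProj 1) (RProj 2)).
Lemma ok_tmul : ok 2 tmul (fun _ a => nth 0 a 0 * nth 1 a 0).
Proof.
  eapply ok_ext. apply ok_prim. apply ok_zero.
  apply ok_Pl; apply ok_proj; lia.
  intros p [|y [|x a]] L; simpl in L; try lia. simpl.
  induction y; simpl; try rewrite IHy; auto; lia.
Qed.
Definition Mul t1 t2 := RComp tmul [t1; t2].
Lemma ok_Mul n t1 F1 t2 F2 : ok n t1 F1 -> ok n t2 F2 -> ok n (Mul t1 t2) (fun p a => F1 p a * F2 p a).
Proof. intros. eapply ok_ext. apply comp2. apply ok_tmul. all: eauto. Qed.

Definition tpred := RPrim RZero (RProj 0).
Lemma ok_tpred : ok 1 tpred (fun _ a => pred (nth 0 a 0)).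
Proof.
  eapply ok_ext. apply ok_prim. apply ok_zero. apply ok_proj; lia.
  intros p [|y a] L; simpl in L; try lia. destruct y; reflexivity.
Qed.
Definition Pred t := RComp tpred [t].
Lemma ok_Pred n t F : ok n t F -> ok n (Pred t) (fun p a => pred (F p a)).
Proof. intros. eapply ok_ext. apply comp1. apply ok_tpred. all: eauto. Qed.

Definition tsubr := RPrim (RProj 0) (Pred (RProj 1)).
Lemma ok_tsubr : ok 2 tsubr (fun _ a => nth 1 a 0 - nth 0 a 0).
Proof.
  eapply ok_ext. apply ok_prim. apply ok_proj; lia. apply ok_Pred. apply ok_proj; lia.
  intros p [|y [|x a]] L; simpl in L; try lia. simpl.
  induction y; simpl. lia. rewrite IHy. lia.
Qed.
Definition Sub t1 t2 := RComp tsubr [t2; t1].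
Lemma ok_Sub n t1 F1 t2 F2 : ok n t1 F1 -> ok n t2 F2 -> ok n (Sub t1 t2) (fun p a => F1 p a - F2 p a).
Proof. intros. eapply ok_ext. apply comp2. apply ok_tsubr. all: eauto. Qed.

Definition tifz := RPrim (RProj 0) (RProj 3).
Lemma ok_tifz : ok 3 tifz (fun _ a => match nth 0 a 0 with 0 => nth 1 a 0 | _ => nth 2 a 0 end).
Proof.
  eapply ok_ext. apply ok_prim. apply ok_proj; lia. apply ok_proj; lia.
  intros p [|y [|x [|z a]]] L; simpl in L; try lia. destruct y; reflexivity.
Qed.
Definition Ifz t0 t1 t2 := RComp tifz [t0; t1; t2].
Lemma ok_Ifz n t0 F0 t1 F1 t2 F2 : ok n t0 F0 -> ok n t1 F1 -> ok n t2 F2 ->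
  ok n (Ifz t0 t1 t2) (fun p a => match F0 p a with 0 => F1 p a | _ => F2 p a end).
Proof. intros. eapply ok_ext. apply comp3. apply ok_tifz. all: eauto. Qed.

Definition tpow2 := RPrim (cst 1) (Pl (RProj 1) (RProj 1)).
Lemma ok_tpow2 : ok 1 tpow2 (fun _ a => 2 ^ nth 0 a 0).
Proof.
  eapply ok_ext. apply ok_prim. apply ok_cst. apply ok_Pl; apply ok_proj; lia.
  intros p [|y a] L; simpl in L; try lia. simpl.
  induction y; simpl; try rewrite IHy; auto; lia.
Qed.
Definition Pow2 t := RComp tpow2 [t].
Lemma ok_Pow2 n t F : ok n t F -> ok n (Pow2 t) (fun p a => 2 ^ F p a).
Proof. intros. eapply ok_ext. apply comp1. apply ok_tpow2. all: eauto. Qed.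

Fixpoint par (n : nat) : nat := match n with 0 => 0 | S n => match par n with 0 => 1 | _ => 0 end end.
Fixpoint dv2 (n : nat) : nat := match n with 0 => 0 | S n => dv2 n + par n end.

Definition tpar := RPrim RZero (Ifz (RProj 1) (cst 1) (cst 0)).
Lemma ok_tpar : ok 1 tpar (fun _ a => par (nth 0 a 0)).
Proof.
  eapply ok_ext. apply ok_prim. apply ok_zero. apply ok_Ifz. apply ok_proj; lia. apply ok_cst. apply ok_cst.
  intros p [|y a] L; simpl in L; try lia. simpl.
  induction y; simpl; try rewrite IHy; auto.
Qed.
Definition Par t := RComp tpar [t].
Lemma ok_Par n t F : ok n t F -> ok n (Par t) (fun p a => par (F p a)).
Proof. intros. eapply ok_ext. apply comp1. apply ok_tpar. all: eauto. Qed.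

Definition tdv2 := RPrim RZero (Pl (RProj 1) (Par (RProj 0))).
Lemma ok_tdv2 : ok 1 tdv2 (fun _ a => dv2 (nth 0 a 0)).
Proof.
  eapply ok_ext. apply ok_prim. apply ok_zero. apply ok_Pl. apply ok_proj; lia. apply ok_Par. apply ok_proj; lia.
  intros p [|y a] L; simpl in L; try lia. simpl.
  induction y; simpl; try rewrite IHy; auto.
Qed.
Definition Dv2 t := RComp tdv2 [t].
Lemma ok_Dv2 n t F : ok n t F -> ok n (Dv2 t) (fun p a => dv2 (F p a)).
Proof. intros. eapply ok_ext. apply comp1. apply ok_tdv2. all: eauto. Qed.

Fixpoint tri (n : nat) : nat := match n with 0 => 0 | S n => tri n + S n end.
Definition ttri := RPrim RZero (Pl (RProj 1) (Sc (RProj 0))).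
Lemma ok_ttri : ok 1 ttri (fun _ a => tri (nth 0 a 0)).
Proof.
  eapply ok_ext. apply ok_prim. apply ok_zero. apply ok_Pl. apply ok_proj; lia. apply ok_Sc. apply ok_proj; lia.
  intros p [|y a] L; simpl in L; try lia. simpl.
  induction y; simpl; try rewrite IHy; auto.
Qed.
Definition Tri t := RComp ttri [t].
Lemma ok_Tri n t F : ok n t F -> ok n (Tri t) (fun p a => tri (F p a)).
Proof. intros. eapply ok_ext. apply comp1. apply ok_ttri. all: eauto. Qed.

Lemma par_le1 n : par n <= 1.
Proof. induction n; simpl. lia. destruct (par n); lia. Qed.
Lemma par_SS n : par (S (S n)) = par n.
Proof. simpl. pose proof (par_le1 n). destruct (par n) as [|[|]]; simpl; lia. Qed.
Lemma dv2_SS n : dv2 (S (S n)) = S (dv2 n).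
Proof. simpl. pose proof (par_le1 n). destruct (par n) as [|[|]]; simpl; lia. Qed.
Lemma par_bit b c : b <= 1 -> par (b + 2 * c) = b.
Proof.
  intros Hb. induction c. destruct b as [|[|]]; simpl; lia.
  replace (b + 2 * S c) with (S (S (b + 2 * c))) by lia. rewrite par_SS. auto.
Qed.
Lemma dv2_bit b c : b <= 1 -> dv2 (b + 2 * c) = c.
Proof.
  intros Hb. induction c. destruct b as [|[|]]; simpl; lia.
  replace (b + 2 * S c) with (S (S (b + 2 * c))) by lia. rewrite dv2_SS. auto.
Qed.

Definition bit (b : bool) : nat := if b then 1 else 0.

Lemma wcode_app u v : wcode (u ++ v) = wcode u + 2 ^ length u * wcode v.
Proof. induction u as [|b u IH]; simpl. lia. rewrite IH. destruct b; lia. Qed.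

Lemma wcode_snoc w b : wcode (w ++ [b]) = wcode w + S (bit b) * 2 ^ length w.
Proof. rewrite wcode_app. simpl. destruct b; simpl; lia. Qed.

Lemma wcode_bounds w : 2 ^ length w <= wcode w + 1 /\ wcode w + 2 <= 2 ^ S (length w).
Proof.
  induction w as [|b w IH]; simpl. lia. destruct b; simpl in *; lia.
Qed.

Lemma wcode_surj c : exists w, wcode w = c.
Proof.
  induction c as [c IH] using (well_founded_induction lt_wf).
  destruct c as [|m]. exists []. reflexivity.
  destruct (IH (dv2 m)) as [w Hw].
  - assert (m = par m + 2 * dv2 m).
    { clear IH. induction m using (well_founded_induction lt_wf).
      destruct m as [|[|m]]. reflexivity. reflexivity.
      rewrite par_SS, dv2_SS. rewrite (H m) at 1 by lia. lia. }
    pose proof (par_le1 m). lia.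
  - exists ((par m =? 1) :: w). simpl. rewrite Hw.
    assert (m = par m + 2 * dv2 m).
    { clear IH Hw. induction m using (well_founded_induction lt_wf).
      destruct m as [|[|m]]. reflexivity. reflexivity.
      rewrite par_SS, dv2_SS. rewrite (H m) at 1 by lia. lia. }
    pose proof (par_le1 m). destruct (par m) as [|[|]]; simpl; lia.
Qed.

Lemma wcode_inj w1 w2 : wcode w1 = wcode w2 -> w1 = w2.
Proof.
  revert w2; induction w1 as [|b w1 IH]; intros [|b2 w2] E; simpl in E; try lia; auto.
  assert (H1 := par_bit (bit b) (wcode w1)). assert (H2 := par_bit (bit b2) (wcode w2)).
  assert (H3 := dv2_bit (bit b) (wcode w1)). assert (H4 := dv2_bit (bit b2) (wcode w2)).
  assert (bit b + 2 * wcode w1 = bit b2 + 2 * wcode w2) as E'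
    by (destruct b, b2; simpl in *; lia).
  assert (bit b = bit b2) as Eb.
  { rewrite <- H1, <- H2, E'; auto; destruct b, b2; simpl; lia. }
  assert (wcode w1 = wcode w2) as Ew.
  { rewrite <- H3, <- H4, E'; auto; destruct b, b2; simpl; lia. }
  rewrite (IH _ Ew). destruct b, b2; simpl in Eb; congruence.
Qed.

Definition dstep (c : nat) := dv2 (pred c).
Lemma wcode_cons b w : wcode (b :: w) = S (bit b + 2 * wcode w).
Proof. simpl. destruct b; simpl; lia. Qed.
Lemma dstep_cons b w : dstep (wcode (b :: w)) = wcode w.
Proof. unfold dstep. rewrite wcode_cons. change (pred (S ?x)) with x.
  apply dv2_bit. destruct b; simpl; lia. Qed.
Lemma digit_cons b w : par (pred (wcode (b :: w))) = bit b.
Proof. rewrite wcode_cons. change (pred (S ?x)) with x.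
  apply par_bit. destruct b; simpl; lia. Qed.
Lemma dstep_skip1 v : dstep (wcode v) = wcode (skipn 1 v).
Proof. destruct v as [|b v]. reflexivity. apply dstep_cons. Qed.

Lemma iter_dstep j w : Nat.iter j dstep (wcode w) = wcode (skipn j w).
Proof.
  induction j; simpl. reflexivity.
  rewrite IHj, dstep_skip1, skipn_skipn. f_equal.
Qed.

Lemma digit_nth j w : j < length w ->
  par (pred (Nat.iter j dstep (wcode w))) = bit (nth j w false).
Proof.
  intros H. rewrite iter_dstep. revert j H; induction w as [|b w IH]; intros j H; simpl in H. lia.
  destruct j. apply digit_cons. simpl skipn. apply IH. lia.
Qed.

Lemma tree_prefix (T : list bool -> Prop) u v : is_tree T -> T (u ++ v) -> T u.
Proof.
  intros HT. induction v as [|b v IH] using rev_ind; intros H.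
  - rewrite app_nil_r in H; auto.
  - rewrite app_assoc in H. apply IH. eapply HT. exact H.
Qed.

Definition lenf (u : nat) := findz (fun m => (u + 2) - 2 ^ S m) u.

Lemma lenf_wcode w : lenf (wcode w) = length w.
Proof.
  unfold lenf. destruct (wcode_bounds w) as [B1 B2].
  assert (length w < 2 ^ length w) by (apply Nat.pow_gt_lin_r; lia).
  apply findz_eq; [lia|lia|].
  intros k Hk. assert (2 ^ S k <= 2 ^ length w) by (apply Nat.pow_le_mono_r; lia). lia.
Qed.

Definition tlen := RMu (Sub (Pl (RProj 1) (cst 2)) (Pow2 (Sc (RProj 0)))).
Lemma ok_tlen : ok 1 tlen (fun _ a => lenf (nth 0 a 0)).
Proof.
  unfold tlen, lenf.
  eapply ok_ext. eapply (ok_mu 1 _ _ (fun _ a => nth 0 a 0)).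
  - apply ok_Sub. apply ok_Pl. apply ok_proj; lia. apply ok_cst.
    apply ok_Pow2. apply ok_Sc. apply ok_proj; lia.
  - intros p a L. simpl. destruct (wcode_surj (nth 0 a 0)) as [w Hw].
    exists (length w). destruct (wcode_bounds w).
    assert (length w < 2 ^ length w) by (apply Nat.pow_gt_lin_r; lia).
    simpl in *. split; lia.
  - intros p a L. reflexivity.
Qed.
Definition Len t := RComp tlen [t].
Lemma ok_Len n t F : ok n t F -> ok n (Len t) (fun p a => lenf (F p a)).
Proof. intros. eapply ok_ext. apply comp1. apply ok_tlen. all: eauto. Qed.

Lemma tri_mono a b : a <= b -> tri a <= tri b.
Proof. induction 1; simpl; lia. Qed.

Definition undec (i : nat) := findz (fun m => match tri (S m) - i with 0 => 1 | _ => 0 end) i.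

Lemma tri_big i : i < tri (S i).
Proof. induction i; simpl in *; lia. Qed.

Lemma undec_pair u g : g <= u -> undec (tri u + g) = u.
Proof.
  intros Hg. unfold undec. apply findz_eq.
  - pose proof (tri_big u). pose proof (tri_mono u (tri u + g)). assert (u <= tri u) by (induction u; simpl; lia). lia.
  - simpl. replace (tri u + S u - (tri u + g)) with (S u - g) by lia.
    destruct (S u - g) eqn:E; [lia|reflexivity].
  - intros k Hk. pose proof (tri_mono (S k) u ltac:(lia)).
    replace (tri (S k) - (tri u + g)) with 0 by lia. discriminate.
Qed.

Lemma undec_spec i : tri (undec i) <= i < tri (S (undec i)).
Proof.
  unfold undec.
  set (f := fun m => match tri (S m) - i with 0 => 1 | _ => 0 end).
  destruct (findz_spec f i i (le_n _)) as [A B].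
  { unfold f. pose proof (tri_big i). destruct (tri (S i) - i) eqn:E; [lia|reflexivity]. }
  set (u := findz f i) in *. split.
  - destruct u as [|u']. simpl; lia.
    specialize (B u' ltac:(lia)). unfold f in B.
    destruct (tri (S u') - i) eqn:E; [|congruence]. lia.
  - unfold f in A. destruct (tri (S u) - i) eqn:E; [discriminate|lia].
Qed.

Definition ut := RMu (Ifz (Sub (Tri (Sc (RProj 0))) (RProj 1)) (cst 1) (cst 0)).
Lemma ok_ut : ok 1 ut (fun _ a => undec (nth 0 a 0)).
Proof.
  eapply ok_ext. eapply (ok_mu 1 _ _ (fun _ a => nth 0 a 0)).
  - apply ok_Ifz. apply ok_Sub. apply ok_Tri. apply ok_Sc. apply ok_proj; lia. apply ok_proj; lia.
    apply ok_cst. apply ok_cst.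
  - intros p a L. exists (nth 0 a 0). split; [lia|]. simpl.
    pose proof (tri_big (nth 0 a 0)). simpl in H.
    destruct (tri (nth 0 a 0) + S (nth 0 a 0) - nth 0 a 0) eqn:E; [lia|reflexivity].
  - intros p a L. reflexivity.
Qed.

Definition isz (x : nat) : nat := match x with 0 => 1 | _ => 0 end.

Definition badv (p : baire) (g u : nat) : nat :=
  (g - u + isz (p u)) + (p (u + 2 ^ lenf u) + p (u + 2 ^ S (lenf u))).

Definition Hfun (p : baire) (i : nat) : nat :=
  let u := undec i in let g := i - tri u in
  match badv p g u with 0 => S g | _ => 0 end.

Definition gT := Sub (RProj 0) (Tri (RProj 1)).
Definition LT := Len (RProj 1).
Definition badT := Pl (Pl (Sub gT (RProj 1)) (Ifz (Orc (RProj 1)) (cst 1) (cst 0)))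
   (Pl (Orc (Pl (RProj 1) (Pow2 LT))) (Orc (Pl (RProj 1) (Pow2 (Sc LT))))).
Definition Hb := Ifz badT (Sc gT) (cst 0).
Definition tH := RComp Hb [RProj 0; RComp ut [RProj 0]].

Lemma ok_tH : ok 1 tH (fun p a => Hfun p (nth 0 a 0)).
Proof.
  assert (P0 : ok 2 (RProj 0) (fun _ a => nth 0 a 0)) by (apply ok_proj; lia).
  assert (P1 : ok 2 (RProj 1) (fun _ a => nth 1 a 0)) by (apply ok_proj; lia).
  assert (G : ok 2 gT (fun _ a => nth 0 a 0 - tri (nth 1 a 0))).
  { apply ok_Sub. exact P0. apply ok_Tri. exact P1. }
  assert (LL : ok 2 LT (fun _ a => lenf (nth 1 a 0))) by (apply ok_Len; exact P1).
  assert (B : ok 2 badT (fun p a => badv p (nth 0 a 0 - tri (nth 1 a 0)) (nth 1 a 0))).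
  { eapply ok_ext. unfold badT. apply ok_Pl. apply ok_Pl. apply ok_Sub. exact G. exact P1.
    apply ok_Ifz. apply ok_Orc. exact P1. apply ok_cst. apply ok_cst.
    apply ok_Pl. apply ok_Orc. apply ok_Pl. exact P1. apply ok_Pow2. exact LL.
    apply ok_Orc. apply ok_Pl. exact P1. apply ok_Pow2. apply ok_Sc. exact LL.
    intros p a _. reflexivity. }
  assert (HB : ok 2 Hb (fun p a => match badv p (nth 0 a 0 - tri (nth 1 a 0)) (nth 1 a 0) with
     0 => S (nth 0 a 0 - tri (nth 1 a 0)) | _ => 0 end)).
  { eapply ok_ext. apply ok_Ifz. exact B. apply ok_Sc. exact G. apply ok_cst.
    intros p a _. reflexivity. }
  eapply ok_ext. apply comp2. exact HB. apply ok_proj; lia. apply comp1. apply ok_ut. apply ok_proj; lia.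
  intros p a _. reflexivity.
Qed.

Definition Fc := Pl (Sub (RProj 1) (RProj 0)) (Ifz (Orc (Pl (RProj 0) (RProj 0))) (cst 1) (cst 0)).
Lemma ok_Fc : ok 2 Fc (fun q a => (nth 1 a 0 - nth 0 a 0) + isz (q (nth 0 a 0 + nth 0 a 0))).
Proof.
  eapply ok_ext. apply ok_Pl. apply ok_Sub; apply ok_proj; lia.
  apply ok_Ifz. apply ok_Orc. apply ok_Pl; apply ok_proj; lia. apply ok_cst. apply ok_cst.
  intros q a _. reflexivity.
Qed.

Definition tD := RPrim (RProj 0) (Dv2 (Pred (RProj 1))).
Lemma ok_tD : ok 2 tD (fun _ a => Nat.iter (nth 0 a 0) dstep (nth 1 a 0)).
Proof.
  eapply ok_ext. apply ok_prim. apply ok_proj; lia. apply ok_Dv2. apply ok_Pred. apply ok_proj; lia.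
  intros p [|y [|c a]] L; simpl in L; try lia. simpl.
  induction y; simpl; auto. rewrite IHy. reflexivity.
Qed.

Definition Bt tj tr tc tL :=
  Ifz (Sub tL tj) (Ifz (Orc (Pl (Pl tr (Pow2 tj)) (Pl tr (Pow2 tj)))) (cst 1) (cst 0))
      (Par (Pred (RComp tD [tj; tc]))).
Definition Bv (q : baire) j r c L :=
  match L - j with
  | 0 => isz (q ((r + 2 ^ j) + (r + 2 ^ j)))
  | _ => par (pred (Nat.iter j dstep c))
  end.
Lemma ok_Bt n tj Fj tr Fr tc Fc' tL FL : ok n tj Fj -> ok n tr Fr -> ok n tc Fc' -> ok n tL FL ->
  ok n (Bt tj tr tc tL) (fun q a => Bv q (Fj q a) (Fr q a) (Fc' q a) (FL q a)).
Proof.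
  intros. eapply ok_ext. apply ok_Ifz. apply ok_Sub; eauto.
  apply ok_Ifz. apply ok_Orc. apply ok_Pl; apply ok_Pl; try apply ok_Pow2; eauto.
  apply ok_cst. apply ok_cst.
  apply ok_Par. apply ok_Pred. apply comp2. apply ok_tD. all: eauto.
Qed.

Fixpoint Cv (q : baire) c L j : nat :=
  match j with
  | 0 => 0
  | S j' => Cv q c L j' + S (Bv q j' (Cv q c L j') c L) * 2 ^ j'
  end.

Definition tC := RPrim (cst 0) (Pl (RProj 1) (Mul (Sc (Bt (RProj 0) (RProj 1) (RProj 2) (RProj 3))) (Pow2 (RProj 0)))).
Lemma ok_tC : ok 3 tC (fun q a => Cv q (nth 1 a 0) (nth 2 a 0) (nth 0 a 0)).
Proof.
  eapply ok_ext. apply ok_prim. apply ok_cst.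
  apply ok_Pl. apply ok_proj; lia. apply ok_Mul. apply ok_Sc. apply ok_Bt; apply ok_proj; lia.
  apply ok_Pow2; apply ok_proj; lia.
  intros p [|y [|c [|L a]]] HL; simpl in HL; try lia. simpl.
  induction y; simpl; auto. rewrite IHy. reflexivity.
Qed.

Definition Kv q k c L := Bv q k (Cv q c L k) c L.
Definition Kb := Bt (RProj 0) (RComp tC [RProj 0; RProj 1; RProj 2]) (RProj 1) (RProj 2).
Lemma ok_Kb : ok 3 Kb (fun q a => Kv q (nth 0 a 0) (nth 1 a 0) (nth 2 a 0)).
Proof.
  eapply ok_ext. apply ok_Bt; try (apply ok_proj; lia).
  apply comp3. apply ok_tC. all: try (apply ok_proj; lia).
  intros q a _. reflexivity.
Qed.

Definition cstar := RComp (RMu Fc) [Orc (cst 1)].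
Definition tK := RComp Kb [RProj 0; cstar; RComp tlen [cstar]].

Lemma eval_cstar q a c : q 1 <= c -> q (c + c) <> 0 ->
  (forall m, m < c -> q 1 <= m -> q (m + m) = 0) -> eval q cstar a c.
Proof.
  intros H1 H2 H3. unfold cstar. apply e_comp with (vs := [q 1]).
  - constructor; [|constructor]. apply (ok_Orc 0 _ (fun _ _ => 1)). apply ok_cst. simpl; lia.
  - constructor.
    + replace 0 with ((q 1 - c) + isz (q (c + c))) at 2.
      apply (ok_Fc q [c; q 1]). simpl; lia.
      destruct (q (c+c)); [congruence|]. simpl. lia.
    + intros m Hm. exists (pred ((q 1 - m) + isz (q (m + m)))).
      assert (0 < (q 1 - m) + isz (q (m + m))).
      { destruct (Nat.le_gt_cases (q 1) m). rewrite H3 by lia. simpl; lia. lia. }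
      replace (S (pred ((q 1 - m) + isz (q (m + m))))) with ((q 1 - m) + isz (q (m + m))) by lia.
      apply (ok_Fc q [m; q 1]). simpl; lia.
Qed.


Lemma map_nth_seq_self (w : list bool) : map (fun i => nth i w false) (seq 0 (length w)) = w.
Proof.
  induction w as [|b w IH]; simpl. reflexivity. f_equal.
  rewrite <- seq_shift, map_map. simpl. exact IH.
Qed.

Lemma bpair_even p y c : bpair p y (c + c) = p c.
Proof. unfold bpair. replace (c + c) with (2 * c) by lia. rewrite Nat.even_even, Nat.div2_double. reflexivity. Qed.
Lemma bpair_one p y : bpair p y 1 = y 0.
Proof. reflexivity. Qed.

Lemma isz_le1 x : isz x <= 1.
Proof. destruct x; simpl; lia. Qed.
Lemma Bv_le1 q j r c L : Bv q j r c L <= 1.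
Proof. unfold Bv. destruct (L - j). apply isz_le1. apply par_le1. Qed.

Lemma badv_zero p g u : badv p g u = 0 <->
  g <= u /\ p u <> 0 /\ p (u + 2 ^ lenf u) = 0 /\ p (u + 2 ^ S (lenf u)) = 0.
Proof.
  unfold badv, isz. destruct (p u); split; intros; try lia. 
Qed.

Lemma Hfun_char p g : (exists i, Hfun p i = S g) <-> exists u, badv p g u = 0.
Proof.
  split.
  - intros [i Hi]. unfold Hfun in Hi. destruct (badv p (i - tri (undec i)) (undec i)) eqn:E; [|discriminate].
    injection Hi as Hi. subst g. eauto.
  - intros [u Hu]. pose proof Hu as Hu'. apply badv_zero in Hu'. destruct Hu' as [Hg _].
    exists (tri u + g). unfold Hfun. rewrite undec_pair by exact Hg.
    replace (tri u + g - tri u) with g by lia. rewrite Hu. reflexivity.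
Qed.

Definition prefix_app y k : prefix y (S k) = prefix y k ++ [y k].
Proof. unfold prefix. rewrite seq_S, map_app. reflexivity. Qed.
Lemma prefix_len y k : length (prefix y k) = k.
Proof. unfold prefix. rewrite length_map, length_seq. reflexivity. Qed.

Lemma bitb (r : nat) : r <= 1 -> bit (r =? 1) = r.
Proof. intros. destruct r as [|[|]]; simpl; lia. Qed.

Theorem proposition23 : forall n : nat, 1 <= n -> Wle (C_sharp n) C_N.
Proof.
  intros n Hn. exists tH, tK. intros G HG p T [HT HTp] [x0 [Hsh _]].
  set (h := fun i => Hfun p i).
  set (A := fun g => ~ exists i, h i = S g).
  assert (Hcomp : computes tH p h).
  { intros k. apply (ok_tH p [k]). simpl; lia. }
  destruct Hsh as [Hlev [d Hd]].
  assert (HdA : delta closedN_rep h A) by (simpl; intros; unfold A; tauto).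
  assert (Hne : pdomain C_N A).
  { exists (2 ^ d - 1). change (~ exists i, Hfun p i = S (2 ^ d - 1)). rewrite Hfun_char. intros [u Hu].
    apply badv_zero in Hu. destruct Hu as [Hg [Hu1 [Hu2 Hu3]]].
    destruct (wcode_surj u) as [v Hv]. subst u. rewrite lenf_wcode in Hu2, Hu3.
    destruct (wcode_bounds v) as [B1 B2].
    assert (d < S (length v)).
    { apply (Nat.pow_lt_mono_r_iff 2); [lia|].
      assert (1 <= 2 ^ d) by (apply Nat.neq_0_lt_0, Nat.pow_nonzero; lia). lia. }
    assert (Tv : T v) by (apply HTp; exact Hu1).
    assert (F0 : ~ T (v ++ [false])).
    { rewrite HTp, wcode_snoc. simpl bit. replace (1 * 2 ^ length v) with (2 ^ length v) by lia. tauto. }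
    assert (F1 : ~ T (v ++ [true])).
    { rewrite HTp, wcode_snoc. simpl bit. replace (2 * 2 ^ length v) with (2 ^ S (length v)) by (simpl; lia). tauto. }
    apply F1. apply (Hd v Tv ltac:(lia)). exact F0. }
  destruct (HG h A HdA Hne) as [Hdom [g [Hg0 Ag]]].
  simpl in Hg0.
  exists h. split; [exact Hcomp|]. split; [exact Hdom|].
  assert (Hchild : forall v, T v -> g <= wcode v -> T (v ++ [false]) \/ T (v ++ [true])).
  { intros v Tv Hv. rewrite !HTp, !wcode_snoc. simpl bit.
    destruct (p (wcode v + 1 * 2 ^ length v)) eqn:E0; [|left; congruence].
    destruct (p (wcode v + 2 * 2 ^ length v)) eqn:E1; [|right; congruence].
    exfalso. apply Ag. change (exists i, Hfun p i = S g). rewrite Hfun_char. exists (wcode v).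
    apply badv_zero. rewrite lenf_wcode. apply HTp in Tv.
    replace (wcode v + 2 ^ length v) with (wcode v + 1 * 2 ^ length v) by lia.
    replace (wcode v + 2 ^ S (length v)) with (wcode v + 2 * 2 ^ length v) by (simpl; lia).
    auto. }
  assert (Hex : exists c, g <= c /\ p c <> 0).
  { assert (g < 2 ^ g) by (apply Nat.pow_gt_lin_r; lia).
    assert (n < 2 ^ n) by (apply Nat.pow_gt_lin_r; lia).
    assert (2 ^ n <= 2 ^ (n + g)) by (apply Nat.pow_le_mono_r; lia).
    assert (2 ^ g <= 2 ^ (n + g)) by (apply Nat.pow_le_mono_r; lia).
    destruct (Hlev (n + g) ltac:(lia)) as [l [_ [Hl Hm]]].
    destruct l as [|w0 l]; simpl in Hl; [lia|].
    destruct (proj2 (Hm w0) (or_introl eq_refl)) as [Lw Tw].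
    exists (wcode w0). destruct (wcode_bounds w0). rewrite Lw in *. split; [lia|]. apply HTp; exact Tw. }
  destruct Hex as [c0 [Hc0 Hc0']].
  set (f := fun c => (g - c) + isz (p c)).
  destruct (findz_spec f c0 c0 (le_n _)) as [Fz Fmin].
  { unfold f. destruct (p c0); [congruence|]. simpl. lia. }
  set (cs := findz f c0) in *.
  assert (Hcs1 : g <= cs /\ p cs <> 0).
  { unfold f in Fz. destruct (p cs); simpl in Fz; split; lia. }
  set (q := bpair p (pval G h)).
  assert (Hq1 : q 1 = g) by (unfold q; rewrite bpair_one; exact Hg0).
  assert (Hqe : forall c, q (c + c) = p c) by (intros; apply bpair_even).
  assert (Ecs : forall a, eval q cstar a cs).
  { intros a. apply eval_cstar; rewrite ?Hq1, ?Hqe. lia. tauto.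
    intros m Hm Hgm. rewrite Hqe. specialize (Fmin m Hm). unfold f in Fmin. destruct (p m); auto.
    exfalso. apply Fmin. simpl. lia. }
  set (Ls := lenf cs).
  set (r := fun k => Kv q k cs Ls).
  exists r. split.
  { intros k. apply e_comp with (vs := [k; cs; Ls]).
    - constructor. constructor. reflexivity.
      constructor. apply Ecs.
      constructor. apply e_comp with (vs := [cs]). constructor. apply Ecs. constructor.
      apply (ok_tlen q [cs]). simpl; lia. constructor.
    - apply (ok_Kb q [k; cs; Ls]). simpl; lia. }
  set (y := fun k => r k =? 1).
  assert (Hr1 : forall k, r k <= 1) by (intros; apply Bv_le1).
  exists y. split.
  { simpl. intros i. unfold y. pose proof (Hr1 i). destruct (r i) as [|[|]]; simpl; lia. }
  split; [split; [exact Hlev| exists d; exact Hd]|].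
  destruct (wcode_surj cs) as [ws Hws].
  assert (HLs : Ls = length ws) by (unfold Ls; rewrite <- Hws; apply lenf_wcode).
  assert (Tws : T ws) by (apply HTp; rewrite Hws; tauto).
  assert (Hbit : forall k, bit (y k) = Bv q k (Cv q cs Ls k) cs Ls).
  { intros k. unfold y. rewrite bitb by apply Hr1. reflexivity. }
  assert (Hcode : forall k, Cv q cs Ls k = wcode (prefix y k)).
  { induction k. reflexivity.
    rewrite prefix_app, wcode_snoc, prefix_len, <- IHk. simpl Cv. rewrite Hbit. reflexivity. }
  assert (Hdig : forall k, k < Ls -> y k = nth k ws false).
  { intros k Hk. assert (bit (y k) = bit (nth k ws false)).
    { rewrite Hbit. unfold Bv. destruct (Ls - k) eqn:E; [lia|]. rewrite <- Hws.
      apply digit_nth. lia. }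
    destruct (y k), (nth k ws false); simpl in H; congruence. }
  assert (HpLs : prefix y Ls = ws).
  { transitivity (map (fun i => nth i ws false) (seq 0 (length ws))); [|apply map_nth_seq_self]. rewrite <- HLs. unfold prefix.
    apply map_ext_in. intros i Hi. apply in_seq in Hi. apply Hdig. lia. }
  assert (Hmono : forall j, Cv q cs Ls Ls <= Cv q cs Ls (Ls + j)).
  { induction j. rewrite Nat.add_0_r; lia. rewrite Nat.add_succ_r. simpl Cv. lia. }
  assert (Hhi : forall j, T (prefix y (Ls + j))).
  { induction j. rewrite Nat.add_0_r, HpLs. exact Tws.
    rewrite Nat.add_succ_r, prefix_app.
    set (k := Ls + j) in *.
    assert (Hgk : g <= wcode (prefix y k)).
    { rewrite <- (Hcode k). pose proof (Hmono j) as M1. change (Ls + j) with k in M1.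
      pose proof (Hcode Ls) as M2. rewrite HpLs, Hws in M2. lia. }
    assert (Hyk : bit (y k) = isz (p (wcode (prefix y k ++ [false])))).
    { rewrite Hbit. unfold Bv. replace (Ls - k) with 0 by lia.
      rewrite Hqe, wcode_snoc, prefix_len, <- Hcode. simpl bit. f_equal. f_equal. lia. }
    destruct (p (wcode (prefix y k ++ [false]))) eqn:E.
    - simpl in Hyk. destruct (y k); simpl in Hyk; [|discriminate].
      destruct (Hchild _ IHj Hgk) as [C|C]; auto. apply HTp in C. congruence.
    - simpl in Hyk. destruct (y k); simpl in Hyk; [discriminate|].
      apply HTp. congruence. }
  intros k. destruct (Nat.le_gt_cases k Ls).
  - assert (prefix y Ls = prefix y k ++ map y (seq k (Ls - k))).
    { unfold prefix. replace Ls with (k + (Ls - k)) at 1 by lia. rewrite seq_app, map_app. reflexivity. }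
    apply (tree_prefix T _ (map y (seq k (Ls - k))) HT). rewrite <- H0, HpLs. exact Tws.
  - replace k with (Ls + (k - Ls)) by lia. apply Hhi.
Qed.
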